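(* For $h\in[H]$, let $\mathcal D_h$ be an offline dataset as described, with current-state and next-state marginal densities $d^D_h$ and $d^{D,\dagger}_h$. For any function $w_h:\mathcal X\to[-C^{\mathbf x}_h,C^{\mathbf x}_h]$ and any pseudo-policy $\bar\pi$ with $\bar\pi_h(a\mid x)/\pi^D_h(a\mid x)\le C^{\mathbf a}_h$ for all $x\in\mathcal X,a\in\mathcal A$, we have $\big\|\mathbf P^{\bar\pi}_h(d^D_hw_h)/d^{D,\dagger}_h\big\|_\infty\le C^{\mathbf x}_hC^{\mathbf a}_h$.
   Context: Finite-horizon MDP with measurable state space $\mathcal X$, finite action space $\mathcal A$, $[H]=\{0,\dots,H-1\}$, transitions $P_h$. Offline data: $\mathcal D_h$ consists of tuples $(x_h,a_h,x_{h+1})$ generated by an arbitrary (possibly history-dependent) roll-in to $x_h$, then $a_h\sim\pi^D_h(\cdot\mid x_h)$ for a Markov single-step policy $\pi^D_h$, then $x_{h+1}\sim P_h(\cdot\mid x_h,a_h)$; $d^D_h$, $d^{D,\dagger}_h$ are the marginal densities of $x_h$ and $x_{h+1}$. $(\mathbf P^{\bar\pi}_hd)(x'):=\iint P_h(x'\mid x,a)\bar\pi_h(a\mid x)d(x)\mathrm dx\,\mathrm da$. A pseudo-policy is $\bar\pi_h=\min\{\pi_h,C\pi^D_h\}$ for a Markov policy $\pi$ and constant $C>0$. Ratios use the convention $0/0=0$. *)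

(* Defs.v *)
From HB Require Import structures.
From mathcomp Require Import all_boot all_order all_algebra.
From mathcomp Require Import all_classical all_reals all_analysis.
Set Implicit Arguments. Unset Strict Implicit. Unset Printing Implicit Defensive.
Import Order.TTheory GRing.Theory Num.Theory.
Local Open Scope ring_scope.
Local Open Scope classical_set_scope.

Section Defs.
Context {R : realType} {dX : measure_display} {X : measurableType dX} {A : finType}.

Definition is_policy (pi : X -> A -> R) : Prop :=
  (forall x a, 0 <= pi x a) /\ (forall x, \sum_(a : A) pi x a = 1) /\
  (forall a, measurable_fun setT (fun x => pi x a)).

Definition pseudo_policy (pi piD : X -> A -> R) (C : R) : X -> A -> R :=
  fun x a => Num.min (pi x a) (C * piD x a).

(* Transition kernel given by densities: P x a x' = P(x' | x, a) w.r.t. mu. *)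
Definition is_transition_density (mu : {measure set X -> \bar R})
    (P : X -> A -> X -> R) : Prop :=
  (forall x a x', 0 <= P x a x') /\
  (forall x a, (\int[mu]_x' (P x a x')%:E = 1)%E) /\
  (forall a x', measurable_fun setT (fun x => P x a x')) /\
  (forall x a, measurable_fun setT (P x a)).

Definition is_density (mu : {measure set X -> \bar R}) (d : X -> R) : Prop :=
  (forall x, 0 <= d x) /\ measurable_fun setT d /\ (\int[mu]_x (d x)%:E = 1)%E.

Definition Pop (mu : {measure set X -> \bar R}) (P : X -> A -> X -> R)
    (pib : X -> A -> R) (d : X -> R) : X -> \bar R :=
  fun x' => (\int[mu]_x (\sum_(a : A) P x a x' * pib x a * d x)%:E)%E.

(* |num / den| with the convention 0/0 = 0 (and c/0 = +oo for c <> 0). *)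
Definition eratio (num den : \bar R) : \bar R :=
  if den == 0%E then (if num == 0%E then 0%E else +oo%E) else (`|num| * den^-1)%E.

Definition sup_ratio (num den : X -> \bar R) : \bar R :=
  ereal_sup [set eratio (num x) (den x) | x in [set: X]].

End Defs.

(* Main.v *)
Require Import Defs.
From HB Require Import structures.
From mathcomp Require Import all_boot all_order all_algebra.
From mathcomp Require Import all_classical all_reals all_analysis.
From mathcomp Require Import ring lra measurable_realfun.
Import Order.TTheory GRing.Theory Num.Theory.
Local Open Scope ring_scope.
Local Open Scope classical_set_scope.

Theorem lemma10 (R : realType) (dX : measure_display) (X : measurableType dX)
  (A : finType) (mu : {measure set X -> \bar R}) (H : nat)
  (P : 'I_H -> X -> A -> X -> R)            (* P h x a x' = P_h(x' | x, a) *)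
  (piD : 'I_H -> X -> A -> R)               (* data policy pi^D_h(a | x) *)
  (dD : 'I_H -> X -> R)                     (* marginal density d^D_h of x_h *)
  (h : 'I_H)
  (HP : is_transition_density mu (P h))
  (HpiD : is_policy (piD h))
  (HdD : is_density mu (dD h))
  (Cx Ca : R) (w : X -> R)
  (Hwm : measurable_fun setT w)
  (Hw : forall x, - Cx <= w x <= Cx)
  (pi : X -> A -> R) (Hpi : is_policy pi) (C : R) (HC : 0 < C)
  (Hratio : forall x a, pseudo_policy pi (piD h) C x a / piD h x a <= Ca) :
  let pibar := pseudo_policy pi (piD h) C in
  let dDdag := Pop mu (P h) (piD h) (dD h) in   (* next-state marginal density d^{D,dagger}_h *)
  (sup_ratio (Pop mu (P h) pibar (fun x => (dD h x * w x)%R)) dDdag <= (Cx * Ca)%:E)%E.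
Proof.
cbv zeta.
pose pibar := pseudo_policy pi (piD h) C.
pose dDdag := Pop mu (P h) (piD h) (dD h).
change (sup_ratio (Pop mu (P h) pibar (fun x => (dD h x * w x)%R)) dDdag
  <= (Cx * Ca)%:E)%E.
case: HP => [P0 [_ [Pm _]]].
case: HpiD => [piD0 [piD1 piDm]].
case: Hpi => [pi0 [_ pim]].
case: HdD => [dD0 [dDm _]].
have pb0 : forall x a, 0 <= pibar x a.
  move=> x a; rewrite /pibar /pseudo_policy le_min pi0 /=.
  exact: mulr_ge0 (ltW HC) (piD0 _ _).
have pbCa : forall x a, pibar x a <= Ca * piD h x a.
  move=> x a; case: (eqVneq (piD h x a) 0) => [E|ne].
    by rewrite E mulr0 /pibar /pseudo_policy E mulr0 ge_min lexx orbT.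
  have pos : 0 < piD h x a by rewrite lt_neqAle eq_sym ne piD0.
  by rewrite -ler_pdivrMr //; exact: Hratio.
have pbm : forall a, measurable_fun setT (fun x => pibar x a).
  move=> a; rewrite /pibar /pseudo_policy.
  exact: (measurable_realfun.measurable_minr (pim a) (measurable_realfun.measurable_funM (measurable_cst C) (piDm a))).
apply: ge_ereal_sup => _ [x' _ <-].
have Cx0 : 0 <= Cx by have /andP[h1 h2] := Hw x'; lra.
have Ca0 : 0 <= Ca.
  case: (pickP [pred a : A | true]) => [a _|H0].
    by apply: le_trans (Hratio x' a); apply: divr_ge0 (pb0 _ _) (piD0 _ _).
  exfalso; move: (piD1 x'); rewrite big_pred0 => [/eqP|i]; last exact: H0 i.
  by rewrite eq_sym oner_eq0.
set f := fun x => \sum_(a : A) P h x a x' * pibar x a * (dD h x * w x).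
set g := fun x => \sum_(a : A) P h x a x' * piD h x a * dD h x.
have fm : measurable_fun setT f.
  apply: measurable_sum => a.
  apply: measurable_realfun.measurable_funM; first exact: measurable_realfun.measurable_funM (Pm a x') (pbm a).
  exact: measurable_realfun.measurable_funM dDm Hwm.
have gm : measurable_fun setT g.
  apply: measurable_sum => a.
  apply: measurable_realfun.measurable_funM; first exact: measurable_realfun.measurable_funM (Pm a x') (piDm a).
  exact: dDm.
have g0 : forall x, 0 <= g x.
  move=> x; apply: sumr_ge0 => a _; apply: mulr_ge0 (dD0 _).
  exact: mulr_ge0 (P0 _ _ _) (piD0 _ _).
have fg : forall x, `|f x| <= Cx * Ca * g x.
  move=> x; apply: le_trans (ler_norm_sum _ _ _) _.
  rewrite /g mulr_sumr; apply: ler_sum => a _.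
  rewrite !normrM (ger0_norm (P0 _ _ _)) (ger0_norm (pb0 _ _)) (ger0_norm (dD0 _)).
  have -> : Cx * Ca * (P h x a x' * piD h x a * dD h x)
     = P h x a x' * (Ca * piD h x a) * (dD h x * Cx) by ring.
  apply: ler_pM; first by apply: mulr_ge0 (P0 _ _ _) (pb0 _ _).
    by apply: mulr_ge0 (dD0 _) (normr_ge0 _).
    by apply: ler_pM; [exact: P0|exact: pb0|exact: lexx|exact: pbCa].
  apply: ler_pM; [exact: dD0|exact: normr_ge0|exact: lexx|].
  by rewrite ler_norml Hw.
have hI : (`|Pop mu (P h) pibar (fun x => (dD h x * w x)%R) x'|
           <= (Cx * Ca)%:E * dDdag x')%E.
  rewrite /Pop /dDdag /Pop.
  apply: le_trans (le_abse_integral _ _ _) _ => //.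
    by apply/measurable_realfun.measurable_EFinP; exact: fm.
  rewrite -ge0_integralZl //; last by rewrite lee_fin mulr_ge0.
    apply: ge0_le_integral => //.
    - have fE : measurable_fun setT (fun x => (f x)%:E : \bar R) by apply/measurable_realfun.measurable_EFinP.
      exact (measurableT_comp (@abse_measurable R setT) fE).
    - apply/measurable_realfun.measurable_EFinP.
      exact: (measurable_realfun.measurable_funM (measurable_cst (Cx * Ca)) gm).
    - by move=> x _; rewrite -EFinM lee_fin; exact: (fg x).
  - by apply/measurable_realfun.measurable_EFinP; exact: gm.
  - by move=> x _; rewrite lee_fin; exact: g0.
have D0 : (0 <= dDdag x')%E.
  by apply: integral_ge0 => x _; rewrite lee_fin; exact: g0.
move: hI D0; set N := Pop _ _ _ _ x'; set D := dDdag x' => hI D0.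
rewrite /eratio; case: eqP => [DE|Dn0].
  rewrite DE mule0 in hI.
  have -> : N == 0%E by rewrite -abse_eq0 eq_le hI abse_ge0.
  by rewrite lee_fin mulr_ge0.
move: D Dn0 D0 hI => [r| |] Dn0 D0 hI //.
  have rpos : 0 < r.
    by rewrite lt_neqAle eq_sym -lee_fin D0 andbT; apply/eqP => E; apply: Dn0; rewrite E.
  rewrite inver gt_eqF //.
  move: N hI => [n| |] hI //.
  by rewrite /= -EFinM lee_fin ler_pdivrMr // -lee_fin EFinM.
by rewrite invey mule0 lee_fin mulr_ge0.
Qed.
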